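(* Let $(x,y)$ be a random pair with values in $\mathcal{X}\times\{-1,+1\}$ with some distribution $P$ (so $\Pr\{x\in\mathcal{X}\}=1$). Let $f_\theta:\mathcal{X}\times\mathbb{R}\to\mathbb{R}$ satisfy the scalable-classifier assumption, and let $\bar\rho(x)$ denote the unique solution of $f_\theta(x,\bar\rho(x))=0$. Let $\mathcal{Z}_c=\{(x_i,y_i)\}_{i=1}^{n_c}$ be $n_c$ i.i.d. samples from $P$. Let $\varepsilon,\delta\in(0,1)$ and let $r$ be an integer with $1\le r\le n_c$ and $$\mathbf{B}(r-1;n_c,\varepsilon)\le\delta.$$ Let $\{\tilde x^U_j\}_{j=1}^{n_U}$ be the feature vectors of all samples in $\mathcal{Z}_c$ with label $-1$ (listed with multiplicity), define, when $n_U\ge r$, $$\rho_\varepsilon=\max{}^{(r)}\big(\{\bar\rho(\tilde x^U_j)\}_{j=1}^{n_U}\big),$$ and define $\mathcal{S}_\varepsilon=\{x\in\mathcal{X}: f_\theta(x,\rho_\varepsilon)<0\}$ if $n_U\ge r$ and $\mathcal{S}_\varepsilon=\mathcal{X}$ otherwise. Then, with probability at least $1-\delta$ with respect to the draw of $\mathcal{Z}_c$, $$\Pr_{(x,y)\sim P}\{y=-1\ \text{and}\ x\in\mathcal{S}_\varepsilon\}\le\varepsilon,$$ where $(x,y)$ is drawn independently of $\mathcal{Z}_c$.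
   Context: Scalable-classifier assumption: for every $x\in\mathcal{X}$, the map $\rho\mapsto f_\theta(x,\rho)$ is continuous and strictly increasing, and $\lim_{\rho\to-\infty}f_\theta(x,\rho)<0<\lim_{\rho\to+\infty}f_\theta(x,\rho)$ (under this assumption $\bar\rho(x)$ exists and is unique). Binomial CDF: $\mathbf{B}(k;n,\varepsilon)=\sum_{i=0}^{k}\binom{n}{i}\varepsilon^i(1-\varepsilon)^{n-i}$. Generalized max: for a finite collection $\Gamma=\{\gamma_i\}_{i=1}^n$ of reals and integer $r\in\{1,\dots,n\}$, order it as $\gamma_{(1)}\ge\gamma_{(2)}\ge\dots\ge\gamma_{(n)}$ and set $\max^{(r)}(\Gamma)=\gamma_{(r)}$ (the $r$-th largest value, counting multiplicity). *)

(* Defs.v *)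
From HB Require Import structures.
From mathcomp Require Import all_boot all_order all_algebra.
From mathcomp Require Import all_classical all_reals all_analysis.
Set Implicit Arguments. Unset Strict Implicit. Unset Printing Implicit Defensive.
Import Order.TTheory GRing.Theory Num.Theory.
Import numFieldNormedType.Exports.
Local Open Scope classical_set_scope.
Local Open Scope ring_scope.

(* Labels {-1,+1} are encoded by bool: true = +1, false = -1. *)

Definition scalable_classifier {R : realType} {X : Type} (f : X -> R -> R) : Prop :=
  forall x : X,
    continuous (f x) /\
    {homo f x : a b / a < b} /\
    exists l1 l2 : \bar R,
      ((f x r)%:E @[r --> -oo] --> l1) /\ ((f x r)%:E @[r --> +oo] --> l2) /\
      (l1 < 0)%E /\ (0 < l2)%E.

Definition rho_bar {R : realType} {X : Type} (f : X -> R -> R) (x : X) : R :=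
  xget 0 [set r | f x r = 0].

Definition binom_cdf {R : realType} (k n : nat) (eps : R) : R :=
  \sum_(i < k.+1) ('C(n, i))%:R * eps ^+ i * (1 - eps) ^+ (n - i).

(* Generalized max: r-th largest element (counting multiplicity), 1 <= r <= size s. *)
Definition gen_max {R : realType} (r : nat) (s : seq R) : R :=
  nth 0 (sort (fun a b : R => b <= a) s) r.-1.

Definition iid_sample {R : realType} {d d' : measure_display}
  {X : measurableType d} {Omega : measurableType d'} (n : nat)
  (Q : probability Omega R) (P : probability (X * bool)%type R)
  (Z : 'I_n -> Omega -> (X * bool)%type) : Prop :=
  (forall i, measurable_fun setT (Z i)) /\
  forall A : 'I_n -> set (X * bool)%type, (forall i, measurable (A i)) ->
    Q (\bigcap_i (Z i @^-1` A i)) = (\prod_(i < n) P (A i))%E.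

Definition neg_scores {R : realType} {X Omega : Type} (n : nat) (f : X -> R -> R)
  (Z : 'I_n -> Omega -> (X * bool)%type) (w : Omega) : seq R :=
  [seq rho_bar f (Z i w).1 | i <- enum 'I_n & ~~ (Z i w).2].

Definition S_eps {R : realType} {X Omega : Type} (n r : nat) (f : X -> R -> R)
  (Z : 'I_n -> Omega -> (X * bool)%type) (w : Omega) : set X :=
  if (r <= size (neg_scores f Z w))%N
  then [set x | f x (gen_max r (neg_scores f Z w)) < 0]
  else setT.

(* Main.v *)
Require Import Defs.
From HB Require Import structures.
From mathcomp Require Import all_boot all_order all_algebra.
From mathcomp Require Import all_classical all_reals all_analysis.
From mathcomp Require Import ring lra.
Import Order.TTheory GRing.Theory Num.Theory.
Import numFieldNormedType.Exports.
Set Implicit Arguments.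
Local Open Scope classical_set_scope.
Local Open Scope ring_scope.

Lemma up_helper (R : realType) d (T : measurableType d) (P : probability T R)
  (F : nat -> set T) (e : R) : (forall k, measurable (F k)) ->
  (forall n m, (n <= m)%N -> F n `<=` F m) ->
  (forall k, P (F k) <= e%:E)%E -> (P (\bigcup_k F k) <= e%:E)%E.
Proof.
move=> mF hF le.
have hF' : {homo F : n m / (n <= m)%N >-> (n <= m)%O}.
  by move=> n m /hF /subsetPset.
have cv := nondecreasing_cvg_mu (mu:=P) mF (bigcup_measurable (fun k _ => mF k)) hF'.
rewrite -(cvg_lim _ cv); last exact: ereal_hausdorff. apply: lime_le; first exact: cvgP cv.
apply: nearW => k; exact: le.

Qed.

Lemma down_helper (R : realType) d (T : measurableType d) (P : probability T R)
  (F : nat -> set T) (e : R) : (forall k, measurable (F k)) ->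
  (forall n m, (n <= m)%N -> F m `<=` F n) ->
  (forall k, e%:E <= P (F k))%E -> (e%:E <= P (\bigcap_k F k))%E.
Proof.
move=> mF hF le.
have hF' : {homo F : n m / (n <= m)%N >-> (m <= n)%O}.
  by move=> n m /hF /subsetPset.
have fin : (P (F 0%N) < +oo)%E by rewrite (le_lt_trans (probability_le1 P (mF 0%N))) // ltry.
have cv := nonincreasing_cvg_mu (mu:=P) fin mF (bigcapT_measurable mF) hF'.
rewrite -(cvg_lim _ cv); last exact: ereal_hausdorff. apply: lime_ge; first exact: cvgP cv.
apply: nearW => k; exact: le.

Qed.


Lemma binom0n (R : realType) k (p : R) : binom_cdf k 0 p = 1.
Proof.
rewrite /binom_cdf big_ord_recl /= bin0 sub0n !expr0 !mulr1.
by rewrite big1 ?addr0 // => i _; rewrite bin_small // !mul0r.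
Qed.

Lemma binom_term (R : realType) n i (p : R) :
  ('C(n, i.+1))%:R * p ^+ i.+1 * (1 - p) ^+ (n - i) =
  (1 - p) * (('C(n, i.+1))%:R * p ^+ i.+1 * (1 - p) ^+ (n - i.+1)).
Proof.
case: (ltnP i n) => hin.
  by rewrite -(subnSK hin) [(1 - p) ^+ _.+1]exprS; ring.
by rewrite bin_small ?ltnS // !mul0r mulr0.
Qed.

Lemma binom0S (R : realType) n (p : R) :
  binom_cdf 0 n.+1 p = (1 - p) * binom_cdf 0 n p.
Proof.
by rewrite /binom_cdf !big_ord_recl !big_ord0 /= !bin0 !subn0 exprS; ring.
Qed.

Lemma binomSS (R : realType) k n (p : R) :
  binom_cdf k.+1 n.+1 p = p * binom_cdf k n p + (1 - p) * binom_cdf k.+1 n p.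
Proof.
rewrite /binom_cdf big_ord_recl [X in _ = _ + _ * X]big_ord_recl /=.
under eq_bigr => i _ do rewrite /bump /= add1n binS natrD subSS mulrDl mulrDl.
under [X in _ = _ + _ * (_ + X)]eq_bigr => i _ do rewrite /bump /= add1n.
rewrite big_split /=.
have -> : \sum_(i < k.+1) ('C(n, i.+1))%:R * p ^+ i.+1 * (1 - p) ^+ (n - i) =
          (1 - p) * \sum_(i < k.+1) ('C(n, i.+1))%:R * p ^+ i.+1 * (1 - p) ^+ (n - i.+1).
  by rewrite mulr_sumr; apply: eq_bigr => i _; rewrite binom_term.
have -> : \sum_(i < k.+1) ('C(n, i))%:R * p ^+ i.+1 * (1 - p) ^+ (n - i) =
          p * \sum_(i < k.+1) (('C(n, i))%:R * p ^+ i * (1 - p) ^+ (n - i)).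
  by rewrite mulr_sumr; apply: eq_bigr => i _; rewrite exprS; ring.
rewrite !bin0 !subn0 [(1 - p) ^+ n.+1]exprS; ring.
Qed.

Lemma binom_ge0 (R : realType) k n (p : R) : 0 <= p <= 1 -> 0 <= binom_cdf k n p.
Proof.
move=> /andP[p0 p1]; rewrite /binom_cdf; apply: sumr_ge0 => i _.
by rewrite !mulr_ge0 // ?exprn_ge0 // subr_ge0.
Qed.

Lemma binom_monok (R : realType) k n (p : R) : 0 <= p <= 1 ->
  binom_cdf k n p <= binom_cdf k.+1 n p.
Proof.
move=> /andP[p0 p1]; rewrite /binom_cdf [X in _ <= X]big_ord_recr /= lerDl.
by rewrite !mulr_ge0 // ?exprn_ge0 // subr_ge0.
Qed.

Lemma binom_mono (R : realType) n k (p q : R) : 0 <= q -> q <= p -> p <= 1 ->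
  binom_cdf k n p <= binom_cdf k n q.
Proof.
move=> q0 qp p1.
have p0 : 0 <= p by apply: le_trans qp.
have hp : 0 <= p <= 1 by apply/andP.
have hq : 0 <= q <= 1 by apply/andP; split => //; apply: le_trans p1.
elim: n k => [|n IH] k; first by rewrite !binom0n.
case: k => [|k].
  rewrite !binom0S; apply: ler_pM.
  - by rewrite subr_ge0.
  - exact: binom_ge0.
  - by lra.
  - exact: IH.
rewrite !binomSS.
have h1 := IH k; have h2 := IH k.+1; have h3 := @binom_monok R k n q hq.
have a0 := @binom_ge0 R k n q hq; have b0 := @binom_ge0 R k.+1 n q hq.
set a := binom_cdf k n p in h1 *; set b := binom_cdf k.+1 n p in h2 *.
set a' := binom_cdf k n q in h1 h3 a0 *; set b' := binom_cdf k.+1 n q in h2 h3 b0 *.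
nra.
Qed.


Lemma subsets_sum (R : realType) n k (p : R) :
  \sum_(S : {set 'I_n} | (#|S| <= k)%N) p ^+ #|S| * (1 - p) ^+ (n - #|S|)
  = binom_cdf k n p.
Proof.
rewrite (partition_big (fun S : {set 'I_n} => (inord #|S| : 'I_k.+1)) xpredT) //=.
rewrite /binom_cdf; apply: eq_bigr => j _.
rewrite (eq_bigl (fun S : {set 'I_n} => #|S| == j)); last first.
  move=> S /=; apply/andP/eqP => [[hS /eqP <-]|hS]; first by rewrite inordK.
  by split; [rewrite hS -ltnS | apply/eqP/val_inj; rewrite /= hS inordK].
rewrite (eq_bigr (fun _ => p ^+ j * (1 - p) ^+ (n - j))); last by move=> S /eqP ->.
rewrite sumr_const.
have -> : #|[pred S : {set 'I_n} | #|S| == j]| = 'C(n, j).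
  by rewrite -[in RHS](card_ord n) -card_draws cardsE.
by rewrite -mulrA mulr_natl.
Qed.

Lemma ev_neg (R: realType) (g : R -> R) (l : \bar R) (F : set_system R) {PF : ProperFilter F} :

  (g r)%:E @[r --> F] --> l -> (l < 0)%E -> exists r, g r < 0.
Proof.
move=> cv l0.
have nb : nbhs l `]-oo, 0%E[%classic.
  apply: open_nbhs_nbhs; split; first exact: lray_open.
  by rewrite /= in_itv /=.
have hF : F ((fun r => (g r)%:E) @^-1` `]-oo, 0%E[) := cv _ nb.
have [r /=] := filter_ex hF; rewrite in_itv /= lte_fin => h.
by exists r.
Qed.
Lemma ev_pos (R: realType) (g : R -> R) (l : \bar R) (F : set_system R) {PF : ProperFilter F} :

  (g r)%:E @[r --> F] --> l -> (0 < l)%E -> exists r, 0 < g r.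
Proof.
move=> cv l0.
have nb : nbhs l `]0%E, +oo[%classic.
  apply: open_nbhs_nbhs; split; first exact: rray_open.
  by rewrite /= in_itv /= andbT.
have hF : F ((fun r => (g r)%:E) @^-1` `]0%E, +oo[) := cv _ nb.
have [r /=] := filter_ex hF; rewrite in_itv /= andbT lte_fin => h.
by exists r.
Qed.

Lemma rho_bar_root (R : realType) (X : Type) (f : X -> R -> R) :
  scalable_classifier f -> forall x, f x (rho_bar f x) = 0.
Proof.
move=> hf x; rewrite /rho_bar.
suff ex : exists r, f x r = 0.
  exact: (xgetPex 0 ex).
have [cf [hom [l1 [l2 [c1 [c2 [n1 p2]]]]]]] := hf x.
have [a ha] := @ev_neg R (f x) l1 _ _ c1 n1.
have [b hb] := @ev_pos R (f x) l2 _ _ c2 p2.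
have ab : a <= b.
  rewrite leNgt; apply/negP => ba; have := hom _ _ ba.
  by move=> /(lt_trans (lt_trans ha hb)); rewrite ltxx.
have hv : Num.min (f x a) (f x b) <= 0 <= Num.max (f x a) (f x b).
  by rewrite ge_min le_max (ltW ha) (ltW hb) orbT.
have [c _ hc] := @IVT R (f x) a b 0 ab (continuous_subspaceT cf) hv.
by exists c.
Qed.

Lemma neg_iff (R : realType) (X : Type) (f : X -> R -> R) :
  scalable_classifier f -> forall x t, (f x t < 0) = (t < rho_bar f x).
Proof.
move=> hf x t; have r0 := rho_bar_root hf x.
have [_ [hom _]] := hf x.
apply/idP/idP => h.
  rewrite ltNge; apply/negP; rewrite le_eqVlt => /orP[/eqP e|lt].
    by move: h; rewrite -e r0 ltxx.
  by have := hom _ _ lt; rewrite r0 => /(lt_trans h); rewrite ltxx.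
by rewrite -r0; exact: hom.
Qed.


Lemma gen_max_ge (R : realType) (s : seq R) (r : nat) (t : R) : (0 < r)%N ->
  (r <= count (fun x => (t <= x)%R) s)%N -> t <= gen_max r s.
Proof.
move=> r0 hc; rewrite /gen_max.
set leT := (fun a b : R => b <= a).
set s' := sort leT s.
have ps : perm_eq s' s by rewrite perm_sort.
have hc' : (r <= count (fun x => (t <= x)%R) s')%N by rewrite (permP ps).
have so : sorted leT s' by apply: sort_sorted => a b; rewrite /leT le_total.
have tr : transitive leT by move=> a b c h1 h2; rewrite /leT (le_trans h2 h1).
have rf : reflexive leT by move=> a; rewrite /leT lexx.
have sz : (r.-1 < size s')%N.
  by apply: (leq_trans _ (leq_trans hc' (count_size _ _))); rewrite prednK.
rewrite leNgt; apply/negP => lt.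
have : (count (fun x => (t <= x)%R) s' <= r.-1)%N.
  rewrite -(cat_take_drop r.-1 s') count_cat.
  have -> : count (fun x => (t <= x)%R) (drop r.-1 s') = 0%N.
    apply/eqP; rewrite -leqn0 leqNgt -has_count; apply/hasPn => x.
    move=> /(nthP 0) [j hj <-]; rewrite nth_drop; apply/negP => tx.
    rewrite size_drop in hj.
    have hjs : (r.-1 + j < size s')%N by rewrite -ltn_subRL.
    have := sorted_leq_nth tr rf 0 so; rewrite /leT => hh.
    have := hh r.-1 (r.-1 + j) sz hjs (leq_addr _ _) => hle.
    by have := lt_le_trans lt (le_trans tx hle); rewrite ltxx.
  rewrite addn0; apply: (leq_trans (count_size _ _)).
  by rewrite size_take sz.
by move=> h; have := leq_trans hc' h; rewrite -(prednK r0) ltnn.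
Qed.


Lemma cardCn n (S : {set 'I_n}) : #|(fun i : 'I_n => i \notin S)| = (n - #|S|)%N.
Proof.
have h := cardC S; rewrite card_ord in h.
have e : #|(fun i : 'I_n => i \notin S)| = #|[predC S]| by apply: eq_card => i; rewrite !inE.
have le := max_card (mem S); rewrite card_ord in le.
by apply/eqP; rewrite -(eqn_add2l #|S|) subnKC // e h.
Qed.

Lemma union_bound d (T : measurableType d) (R : realType) (mu : probability T R)
  (I : Type) (s : seq I) (Pi : pred I) (F : I -> set T) :
  (forall i, measurable (F i)) ->
  measurable (\big[setU/set0]_(i <- s | Pi i) F i) /\
  (mu (\big[setU/set0]_(i <- s | Pi i) F i) <= \sum_(i <- s | Pi i) mu (F i))%E.
Proof.
move=> mF; elim: s => [|a s [ms IH]]; first by rewrite !big_nil measure0.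
rewrite !big_cons; case: (Pi a) => //; split; first exact: measurableU.
by apply: (le_trans (measureU2 mu (mF a) ms)); apply: leeD.
Qed.

Lemma prod_event (R : realType) (d d' : measure_display)
  (X : measurableType d) (Omega : measurableType d')
  (P : probability (X * bool)%type R) (Q : probability Omega R)
  (n : nat) (Z : 'I_n -> Omega -> (X * bool)%type)
  (hZ : iid_sample Q P Z) (A : set (X * bool)%type) (mA : measurable A)
  (S : {set 'I_n}) :
  Q (\bigcap_i Z i @^-1` (if i \in S then A else ~` A)) =
  ((fine (P A)) ^+ #|S| * (1 - fine (P A)) ^+ (n - #|S|))%:E.
Proof.
have [_ hZ2] := hZ.
rewrite hZ2; last by move=> i; case: (i \in S) => //; exact: measurableC.
have PA : P A = (fine (P A))%:E by rewrite fineK // fin_num_measure.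
rewrite (eq_bigr (fun i => (if i \in S then fine (P A) else 1 - fine (P A))%:E)); last first.
  by move=> i _; case: (i \in S) => //; rewrite probability_setC // PA.
rewrite prodEFin; congr (_%:E).
rewrite (bigID (mem S)) /=.
rewrite (eq_bigr (fun _ => fine (P A))); last by move=> i ->.
rewrite [X in _ * X](eq_bigr (fun _ => 1 - fine (P A))); last by move=> i /negbTE ->.
rewrite !prodr_const; congr (_ ^+ _ * _ ^+ _).
exact: cardCn.
Qed.

Lemma card_count n (S : {set 'I_n}) : #|S| = count (mem S) (enum 'I_n).
Proof. rewrite -sum1_card -sum1_count. rewrite (big_enum_cond). by apply: eq_bigl => i; rewrite inE. Qed.

Lemma arch_inv (R : realType) (e : R) : 0 < e -> exists k : nat, ((k.+1)%:R)^-1 < e.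
Proof.
move=> e0; exists (Num.Def.archi_bound e^-1).
have ie : 0 < e^-1 by rewrite invr_gt0.
have h := @archi_boundP R e^-1 (ltW ie).
rewrite invf_plt ?posrE //; apply: (lt_le_trans h).
by rewrite ler_nat.
Qed.

Lemma in_bigsetU (T : Type) (I : eqType) (s : seq I) (Pi : pred I) (F : I -> set T) (i : I) (w : T) :
  i \in s -> Pi i -> F i w -> (\big[setU/set0]_(j <- s | Pi j) F j) w.
Proof.
elim: s => [//|a s IH]; rewrite inE big_cons => /orP[/eqP <-|hs] hp hF.
  by rewrite hp; left.
by case: (Pi a); [right|]; apply: IH.
Qed.

Theorem theorem1 (R : realType) (d d' : measure_display)
  (X : measurableType d) (Omega : measurableType d')
  (P : probability (X * bool)%type R) (Q : probability Omega R)
  (f : X -> R -> R)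
  (hf : scalable_classifier f)
  (hfmeas : forall rho : R, measurable_fun setT (fun x => f x rho))
  (n_c : nat) (Z : 'I_n_c -> Omega -> (X * bool)%type)
  (hZ : iid_sample Q P Z)
  (eps delta : R) (heps : 0 < eps < 1) (hdelta : 0 < delta < 1)
  (r : nat) (hr : (1 <= r <= n_c)%N)
  (hB : binom_cdf r.-1 n_c eps <= delta) :
  exists E : set Omega, measurable E /\ ((1 - delta)%:E <= Q E)%E /\
    E `<=` [set w | (P [set p : X * bool | p.2 = false /\ S_eps r f Z w p.1]
                     <= eps%:E)%E].
Proof.
have [eps0 eps1] := andP heps; have [delta0 delta1] := andP hdelta.
have [r1 rn] := andP hr.
pose B t := [set p : X * bool | p.2 = false /\ f p.1 t < 0].
have mB : forall t, measurable (B t).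
  move=> t.
  have m1 : measurable [set x | f x t < 0].
    have := hfmeas t measurableT _ (measurable_itv `]-oo, 0[); rewrite setTI.
    congr measurable; apply/seteqP; split=> x /=; rewrite in_itv //.
  have -> : B t = (fst @^-1` [set x | f x t < 0]) `&` (snd @^-1` [set false]).
    by apply/seteqP; split=> p /= [h1 h2].
  apply: measurableI.
    by have := @measurable_fst _ _ X bool measurableT _ m1; rewrite setTI.
  by have := @measurable_snd _ _ X bool measurableT [set false] I; rewrite setTI.
have Bchar : forall t p, B t p <-> p.2 = false /\ t < rho_bar f p.1.
  by move=> t p; rewrite /B /= (neg_iff hf).
have Bmono : forall t1 t2, t1 <= t2 -> B t2 `<=` B t1.
  move=> t1 t2 le p /Bchar [h1 h2]; apply/Bchar; split => //.
  exact: le_lt_trans h2.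
have target_eq : forall w, (r <= size (neg_scores f Z w))%N ->
   [set p : X * bool | p.2 = false /\ S_eps r f Z w p.1] = B (gen_max r (neg_scores f Z w)).
  by move=> w h; rewrite /S_eps h.
have arch_neg : forall x : R, exists k : nat, - (k%:R) < x.
  move=> x; exists (Num.Def.archi_bound `|x|).
  have := @archi_boundP R `|x| (normr_ge0 x).
  by rewrite ltr_norml => /andP[].
have arch_pos : forall x : R, exists k : nat, x < k%:R.
  move=> x; exists (Num.Def.archi_bound `|x|).
  have := @archi_boundP R `|x| (normr_ge0 x).
  by rewrite ltr_norml => /andP[].
have [[t0 Ht0]|noT] := pselect (exists t, (eps%:E < P (B t))%E); last first.
  exists setT; split; first exact: measurableT.
  split; first by rewrite probability_setT lee_fin; lra.
  move=> w _ /=.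
  have Ble : forall t, (P (B t) <= eps%:E)%E.
    by move=> t; rewrite leNgt; apply/negP => h; apply: noT; exists t.
  case: (boolP (r <= size (neg_scores f Z w))%N) => hs.
    by rewrite target_eq.
  have -> : [set p : X * bool | p.2 = false /\ S_eps r f Z w p.1] = \bigcup_k B (- (k%:R)).
    rewrite /S_eps (negbTE hs); apply/seteqP; split=> p /=.
      move=> [h _]; have [k hk] := arch_neg (rho_bar f p.1).
      by exists k => //; apply/Bchar.
    by move=> [k _ /Bchar [h _]].
  apply: up_helper => //.
  by move=> n m nm; apply: Bmono; rewrite lerN2 ler_nat.
pose Ts := [set t | (eps%:E < P (B t))%E].
have Tub : has_ubound Ts.
  case: (pselect (has_ubound Ts)) => // nub; exfalso.
  have big : forall k : nat, (eps%:E <= P (B k%:R))%E.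
    move=> k.
    case: (pselect (exists2 t, Ts t & k%:R < t)) => [[t Tt ltk]|hn].
      apply: (le_trans (ltW Tt)); apply: le_measure; rewrite ?inE //.
      exact: Bmono (ltW ltk).
    exfalso; apply: nub; exists k%:R => t Tt.
    rewrite leNgt; apply/negP => lt; apply: hn; by exists t.
  have mono : forall n m : nat, (n <= m)%N -> B m%:R `<=` B n%:R.
    by move=> n m nm; apply: Bmono; rewrite ler_nat.
  have := @down_helper _ _ _ P (fun k => B k%:R) eps (fun k => mB _) mono big.
  have -> : \bigcap_k B k%:R = set0.
    apply/seteqP; split=> p //= hp; have [k hk] := arch_pos (rho_bar f p.1).
    have /Bchar [_ h2] := hp k I. by have := lt_trans hk h2; rewrite ltxx.
  by rewrite measure0 lee_fin leNgt eps0.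
have hsup : has_sup Ts by split => //; exists t0.
set ts := sup Ts.
have invpos : forall k : nat, 0 < ((k.+1)%:R : R)^-1 by move=> k; rewrite invr_gt0 ltr0Sn.
have invmono : forall n m : nat, (n <= m)%N -> ((m.+1)%:R : R)^-1 <= ((n.+1)%:R)^-1.
  by move=> n m nm; rewrite lef_pV2 ?posrE ?ltr0Sn // ler_nat ltnS.
have Gts : (P (B ts) <= eps%:E)%E.
  have -> : B ts = \bigcup_k B (ts + ((k.+1)%:R)^-1).
    apply/seteqP; split=> p.
      move=> /Bchar [h1 h2].
      have hpos : 0 < rho_bar f p.1 - ts by rewrite subr_gt0.
      have [k hk] := @arch_inv _ _ hpos.
      exists k => //; apply/Bchar; split => //; move: hk; move: (_^-1) => e; lra.
    move=> [k _]; apply: Bmono; have := invpos k; move: (_^-1) => e; lra.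
  apply: up_helper => //.
    move=> n m nm; apply: Bmono; have := invmono n m nm; move: (_^-1) (_^-1) => e1 e2; lra.
  move=> k; rewrite leNgt; apply/negP => h.
  have := sup_upper_bound hsup h; have := invpos k; rewrite -/ts; move: (_^-1) => e; lra.
pose A := \bigcap_k B (ts - ((k.+1)%:R)^-1).
have mA : measurable A := bigcapT_measurable (fun k => mB _).
have PA : (eps%:E <= P A)%E.
  apply: down_helper => //.
    move=> n m nm; apply: Bmono; have := invmono n m nm; move: (_^-1) (_^-1) => e1 e2; lra.
  move=> k; have [t Tt lt] := sup_adherent (invpos k) hsup.
  apply: le_trans (ltW Tt) _; apply: le_measure; rewrite ?inE //; apply: Bmono.
  exact: ltW.
have Achar : forall p, A p -> p.2 = false /\ ts <= rho_bar f p.1.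
  move=> p hp; have /Bchar [h1 _] := hp 0%N I; split => //.
  rewrite leNgt; apply/negP => lt.
  have hpos : 0 < ts - rho_bar f p.1 by rewrite subr_gt0.
  have [k hk] := @arch_inv _ _ hpos.
  have /Bchar [_ h2] := hp k I; move: hk h2; move: (_^-1) => e; lra.
pose pA := fine (P A).
have PAE : P A = pA%:E by rewrite fineK // fin_num_measure.
have pe : eps <= pA by rewrite -lee_fin -PAE.
have p1 : pA <= 1 by rewrite -lee_fin -PAE probability_le1.
pose ES (S : {set 'I_n_c}) := \bigcap_i Z i @^-1` (if i \in S then A else ~` A).
have mES : forall S, measurable (ES S).
  move=> S; apply: fin_bigcap_measurable; first exact: finite_finset.
  move=> i _; have [hZ1 _] := hZ.
  have mi : measurable (if i \in S then A else ~` A).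
    by case: (i \in S) => //; exact: measurableC.
  by have := hZ1 i measurableT _ mi; rewrite setTI.
pose U := \big[setU/set0]_(S : {set 'I_n_c} | (#|S| <= r.-1)%N) ES S.
have [mU QU] := union_bound Q (index_enum _) (fun S : {set 'I_n_c} => (#|S| <= r.-1)%N) ES mES.
exists (~` U); split; first exact: measurableC.
split.
  rewrite probability_setC //.
  have QUle : (Q U <= delta%:E)%E.
    apply: (le_trans QU).
    rewrite (eq_bigr (fun S : {set 'I_n_c} => (pA ^+ #|S| * (1 - pA) ^+ (n_c - #|S|))%:E)); last first.
      by move=> S _; rewrite /ES (prod_event hZ mA).
    rewrite sumEFin lee_fin subsets_sum.
    apply: le_trans hB; apply: binom_mono => //; exact: ltW.
  have QUE : Q U = (fine (Q U))%:E by rewrite fineK // fin_num_measure.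
  move: QUle; rewrite QUE -EFinB !lee_fin; lra.
move=> w /= nU.
pose Sw : {set 'I_n_c} := finset (fun i : 'I_n_c => `[< A (Z i w) >]).
have wES : ES Sw w.
  move=> i _ /=; rewrite inE; case: asboolP => //.
have rS : (r <= #|Sw|)%N.
  rewrite leqNgt; apply/negP => lt; apply: nU.
  apply: (@in_bigsetU _ _ _ _ _ Sw) => //; first by rewrite mem_index_enum.
  by rewrite -ltnS prednK.
have cnt : (r <= count (fun x => (ts <= x)%R) (neg_scores f Z w))%N.
  apply: (leq_trans rS); rewrite card_count /neg_scores [X in (_ <= X)%N]count_map [X in (_ <= X)%N]count_filter.
  apply: sub_count => i /=; rewrite inE => /asboolP /Achar [h1 h2].
  by rewrite h1 h2.
have hs : (r <= size (neg_scores f Z w))%N := leq_trans cnt (count_size _ _).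
rewrite (target_eq w hs).
apply: le_trans Gts; apply: le_measure; rewrite ?inE //; apply: Bmono.
exact: gen_max_ge.
Qed.
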